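(* For every integer $n\ge 1$, let $M_T(n)$ denote the maximum modulus of an independence root over all trees on $n$ vertices. Then $$M_T(n)\le \begin{cases} 2^{\frac{n-1}{2}}+\frac{n-1}{2} & \text{if } n \text{ is odd},\\ 2^{\frac{n-2}{2}}+\frac{n}{2} & \text{if } n \text{ is even}.\end{cases}$$
   Context: For a finite simple graph $G$, the independence polynomial is $i(G,x)=\sum_{k=0}^{\alpha(G)} i_k x^k$, where $i_k$ is the number of independent sets of size $k$ in $G$ (with $i_0=1$) and $\alpha(G)$ is the independence number. Its complex roots are the independence roots of $G$. *)

(* Defs.v *)
From HB Require Import structures.
From mathcomp Require Import all_boot all_order all_algebra.
Set Implicit Arguments. Unset Strict Implicit. Unset Printing Implicit Defensive.
Import Order.TTheory GRing.Theory Num.Theory.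
Local Open Scope ring_scope.

Definition simple_graph (T : finType) (e : rel T) : Prop :=
  symmetric e /\ irreflexive e.

Definition connected_graph (T : finType) (e : rel T) : Prop :=
  forall x y : T, connect e x y.

Definition acyclic_graph (T : finType) (e : rel T) : Prop :=
  forall c : seq T, ucycle e c -> (size c < 3)%N.

Definition is_tree (T : finType) (e : rel T) : Prop :=
  simple_graph e /\ connected_graph e /\ acyclic_graph e.

Definition independent (T : finType) (e : rel T) (S : {set T}) : bool :=
  [forall x in S, forall y in S, ~~ e x y].

Definition indep_count (T : finType) (e : rel T) (k : nat) : nat :=
  #|[set S : {set T} | independent e S && (#|S| == k)]|.

(* Independence polynomial i(G,x) = sum_k i_k x^k (coefficients over C);
   i_k = 0 for k > alpha(G), in particular for k > #|T|. *)
Definition indep_poly (C : nzRingType) (T : finType) (e : rel T) : {poly C} :=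
  \poly_(k < #|T|.+1) (indep_count e k)%:R.

Definition MT_bound (n : nat) : nat :=
  if odd n then (2 ^ ((n - 1) %/ 2) + (n - 1) %/ 2)%N
  else (2 ^ ((n - 2) %/ 2) + n %/ 2)%N.

(* Main.v *)
Require Import Defs.
From HB Require Import structures.
From mathcomp Require Import all_boot all_order all_algebra.
From mathcomp Require Import zify ring.
From Stdlib Require Import Classical.

Set Implicit Arguments. Unset Strict Implicit. Unset Printing Implicit Defensive.

Lemma ar_f1 m m1 m2 p : (m <= m1 + m2 -> m1 <= p -> m2 <= p -> m <= 2 * p)%N.
Proof. lia. Qed.
Lemma ar_f2 s s1 m m1 m2 p k : (m <= m1 + m2 -> s <= s1 + 1 -> s1 + m1 <= p + k + 1 ->
  m2 <= p -> s + m <= 2 * p + k.+1 + 1)%N.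
Proof. lia. Qed.
Lemma ar_e1 s s1 m m1 m2 p j : (m <= m1 + m2 -> s <= s1 + 2 -> s1 + m1 <= p + j + 1 ->
  m2 <= p -> s + m <= 2 * p + j.+1 + 2)%N.
Proof. lia. Qed.
Lemma ar_e2 s s1 m m1 m2 p j : (m <= m1 + m2 -> s <= s1 + 1 -> s1 <= 0 -> m1 <= 1 -> m2 <= 1 ->
  1 <= p -> s + m <= p + j + 2)%N.
Proof. lia. Qed.
Lemma ar_e3 s s1 m m1 m2 p j : (m <= m1 + m2 -> s <= s1 + 1 -> s1 + m1 <= p + j + 2 ->
  m2 <= p -> s + m <= 2 * p + j.+1 + 2)%N.
Proof. lia. Qed.

Ltac plia := repeat match goal with H : _ |- _ => clear H end; lia.

Section Graph.
Variable T : finType.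
Variable e : rel T.
Hypothesis esym : symmetric e.
Hypothesis eirr : irreflexive e.
Hypothesis eacyc : acyclic_graph e.

Definition relA (A : {set T}) : rel T := fun x y => [&& x \in A, y \in A & e x y].
Arguments relA : simpl never.
Definition nb (A : {set T}) x := [set y in A | e x y].

Lemma relA_e A x y : relA A x y -> e x y.
Proof. by case/and3P. Qed.

Lemma path_e A x p : path (relA A) x p -> path e x p.
Proof. by apply: sub_path => a b; apply: relA_e. Qed.

Lemma no_chord x q y : path e x q -> uniq (x :: q) -> y \in q -> y != head x q ->
  e y x -> False.
Proof.
move=> pq uq yq yh eyx.
have iq : (index y q).+1 <= size q by rewrite index_mem.
set r := take (index y q).+1 q.
have : (size (x :: r) < 3)%N.
  apply: eacyc; rewrite /ucycle /= rcons_path take_path //=.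
  have -> : last x r = y.
    rewrite /r (last_nth x) size_takel //= nth_take //.
    by rewrite nth_index.
  rewrite eyx /=.
  have : subseq (x :: r) (x :: q) by rewrite /= eqxx /r; exact: take_subseq.
  by move/subseq_uniq; apply.
rewrite /= /r size_takel //.
case: q pq uq yq yh {r iq} => [//|a q] _ _; rewrite inE /= => /orP[/eqP->|yq].
  by rewrite eqxx.
move=> ya; rewrite eq_sym (negbTE ya) /=.
by case: (index y q).
Qed.

Definition gp (A : {set T}) x q := [&& x \in A, path (relA A) x q & uniq (x :: q)].

Definition maxgp A x q := gp A x q /\ forall x' q', gp A x' q' -> (size q' <= size q)%N.

Lemma gp_size A x q : gp A x q -> (size q < #|T|)%N.
Proof.
case/and3P=> _ _ u; have := card_uniqP u; rewrite /= => <-.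
by rewrite max_card.
Qed.

Lemma exists_maxgp A x q : gp A x q -> exists x' q', maxgp A x' q' /\ (size q <= size q')%N.
Proof.
move=> g; move: {2}(#|T| - size q)%N (leqnn (#|T| - size q)) => m.
elim: m x q g => [|m IH] x q g hm.
  exists x, q; split=> //; split=> // x' q' g'.
  have := gp_size g; have := gp_size g'; lia.
case: (classic (exists x' q', gp A x' q' /\ (size q < size q')%N)).
  case=> x' [q' [g' lt]].
  have [x'' [q'' [mx le]]] := IH x' q' g' ltac:(have := gp_size g'; lia).
  exists x'', q''; split=> //; lia.
move=> nex; exists x, q; split=> //; split=> // x' q' g'.
rewrite leqNgt; apply/negP=> lt; apply: nex; exists x', q'; split=> //.
Qed.

Lemma nb_neq A u y : y \in nb A u -> y != u.
Proof. by rewrite inE => /andP[_ h]; apply/negP => /eqP hh; rewrite hh eirr in h. Qed.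

Lemma leaf_struct A a b : relA A a b -> exists v u, [/\ relA A v u, nb A v = [set u] &
  forall y1 y2, y1 \in nb A u -> y2 \in nb A u -> nb A y1 != [set u] ->
     nb A y2 != [set u] -> y1 = y2].
Proof.
move=> rab.
have gab : gp A a [:: b].
  case/and3P: (rab) => aA bA eab.
  rewrite /gp /= aA rab /= inE andbT; apply/negP => /eqP abe; by rewrite abe eirr in eab.
have [x [q [[g mx] _]]] := exists_maxgp gab.
case: q g mx => [|u q'] g mx.
  by have := mx _ _ gab.
case/and3P: (g) => xA /= /andP[rxu pu] uq.
have ppu := path_e pu.
case/and3P: (rxu) => _ uA exu.
have leaf : nb A x = [set u].
  apply/setP => y; rewrite !inE; apply/idP/idP; last by move/eqP->; rewrite uA exu.
  case/andP => yA exy; apply/negP => /negP yu.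
  case: (boolP (y \in x :: u :: q')) => yin.
    move: yin; rewrite inE => /orP[/eqP yx|yq].
      by rewrite yx eirr in exy.
    apply: (no_chord (x := x) (q := u :: q') (y := y)) => //=.
      by rewrite exu ppu.
    by rewrite esym.
  have ryx : relA A y x by rewrite /relA yA xA esym exy.
  have : gp A y (x :: u :: q') by rewrite /gp yA /= ryx rxu pu /= yin uq.
  by move/mx => /=; rewrite ltnn.
have nbleaf : forall y, y \in nb A u -> y != head u q' -> nb A y = [set u].
  move=> y; rewrite inE => /andP[yA euy] yh.
  case: (eqVneq y x) => [->//|yx].
  have yu : y != u by apply/negP => /eqP yu; rewrite yu eirr in euy.
  have uq1 : uniq (u :: q') by case/andP: uq.
  have ynq : y \notin x :: u :: q'.
    rewrite !inE (negbTE yx) (negbTE yu) /=; apply/negP => yq.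
    by apply: (no_chord (x := u) (q := q') (y := y)) => //; rewrite esym.
  apply/setP => z; rewrite !inE; apply/idP/idP; last by move/eqP->; rewrite uA esym euy.
  case/andP => zA eyz; apply/negP => /negP zu.
  have zy : z != y by apply/negP => /eqP zy; rewrite zy eirr in eyz.
  case: (boolP (z \in x :: u :: q')) => zin.
    move: zin; rewrite inE => /orP[/eqP zx|zq].
      have : y \in nb A x by rewrite inE yA esym -zx eyz.
      by rewrite leaf inE (negbTE yu).
    apply: (no_chord (x := y) (q := u :: q') (y := z)) => //=.
    - by rewrite esym euy ppu.
    - by move: ynq; rewrite !inE negb_or => /andP[_ ->].
    - by rewrite esym.
  have : gp A z (y :: u :: q').
    have rzy : relA A z y by rewrite /relA zA yA esym eyz.
    have ryu : relA A y u by rewrite /relA yA uA esym euy.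
    rewrite /gp zA /= rzy ryu pu /=.
    move: zin ynq; rewrite !inE !negb_or => /andP[_ ->] /andP[_ ->].
    by rewrite zy.
  by move/mx => /=; rewrite ltnn.
exists x, u; split=> // y1 y2 y1n y2n l1 l2.
case: q' {g mx pu ppu uq} nbleaf => [|w q'] nbleaf.
  by rewrite nbleaf ?eqxx // in l1; move: y1n; rewrite inE => /andP[_ h]; apply/negP => /eqP hh; rewrite hh eirr in h.
have -> : y1 = w by apply/eqP; apply: contraNT l1 => h; rewrite nbleaf.
have -> : y2 = w by apply/eqP; apply: contraNT l2 => h; rewrite nbleaf.
done.
Qed.

Definition indIS (A S : {set T}) := (S \subset A) && independent e S.
Definition maxIS (A S : {set T}) := indIS A S && [forall x in A :\: S, exists y in S, e x y].
Definition mIS (A : {set T}) := #|[set S | maxIS A S]|.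

Lemma indepP (S : {set T}) : reflect (forall x y, x \in S -> y \in S -> ~~ e x y) (independent e S).
Proof.
apply: (iffP forall_inP) => [h x y xS yS|h x xS].
  by move/forall_inP: (h x xS); apply.
by apply/forall_inP => y yS; apply: h.
Qed.

Lemma indep_sub (S S' : {set T}) : S' \subset S -> independent e S -> independent e S'.
Proof.
move=> sub /indepP h; apply/indepP => x y xS yS; apply: h; exact: (subsetP sub).
Qed.

Lemma maxISP (A S : {set T}) : reflect [/\ S \subset A, independent e S &
   forall x, x \in A -> x \notin S -> exists2 y, y \in S & e x y] (maxIS A S).
Proof.
apply: (iffP idP).
  case/andP => /andP[sub ind] /forall_inP h; split=> // x xA xS.
  have /existsP[y /andP[yS exy]] : [exists y in S, e x y] by apply: h; rewrite inE xA xS.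
  by exists y.
case=> sub ind h; rewrite /maxIS /indIS sub ind /=; apply/forall_inP => x.
rewrite inE => /andP[xS xA]; have [y yS exy] := h x xA xS.
by apply/existsP; exists y; rewrite yS exy.
Qed.

Lemma decomp (A L : {set T}) u : u \in A -> L \subset nb A u ->
  (forall x, x \in L -> nb A x = [set u]) ->
  (mIS A <= mIS (A :\: (u |: L)) + mIS (A :\: (u |: nb A u)))%N.
Proof.
move=> uA Lnb Lleaf.
have LA : forall x, x \in L -> x \in A.
  by move=> x /(subsetP Lnb); rewrite inE => /andP[].
have Leu : forall x, x \in L -> e x u.
  by move=> x /(subsetP Lnb); rewrite inE esym => /andP[].
have uL : u \notin L by apply/negP => /(subsetP Lnb) /nb_neq; rewrite eqxx.
rewrite /mIS -(cardsID [set S : {set T} | u \in S]) addnC.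
apply: leq_add.
  pose g := fun S : {set T} => S :\: L.
  set D := _ :\: _.
  have LS : forall S, S \in D -> L \subset S.
    move=> S; rewrite !inE => /andP[uS /maxISP[sub ind h]]; apply/subsetP => x xL.
    apply/negPn/negP => xS; have [y yS exy] := h x (LA x xL) xS.
    have : y \in nb A x by rewrite inE exy (subsetP sub).
    by rewrite Lleaf // inE => /eqP yu; rewrite -yu yS in uS.
  rewrite -(card_in_imset (f := g)); last first.
    move=> S1 S2 S1D S2D /= eq.
    have LS1 := LS _ S1D; have LS2 := LS _ S2D.
    apply/setP => x; case: (boolP (x \in L)) => xL.
      by rewrite (subsetP LS1) ?(subsetP LS2).
    by have := congr1 (fun X : {set T} => x \in X) eq; rewrite /g /= !inE xL.
  apply: subset_leq_card; apply/subsetP => X /imsetP[S SD ->].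
  have LSS := LS _ SD; move: SD; rewrite !inE => /andP[uS /maxISP[sub ind h]].
  apply/maxISP; split.
  - apply/subsetP => x; rewrite !inE => /andP[xL xS].
    rewrite negb_or xL (subsetP sub) // !andbT.
    by apply/negP => /eqP xu; move: uS; rewrite -xu xS.
  - by apply: indep_sub ind; apply/subsetP => x; rewrite inE => /andP[].
  - move=> x; rewrite !inE negb_or => /andP[/andP[xu xL] xA] /nandP[xL'|xS].
      by rewrite xL in xL'.
    have [y yS exy] := h x xA xS; exists y => //.
    rewrite inE yS andbT; apply/negP => yL.
    have : x \in nb A y by rewrite inE xA esym exy.
    by rewrite Lleaf // inE (negbTE xu).
pose f := fun S : {set T} => S :\ u.
set D := _ :&: _.
rewrite -(card_in_imset (f := f)); last first.
  move=> S1 S2; rewrite !inE => /andP[_ u1] /andP[_ u2] /= eq.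
  by rewrite -(setD1K u1) -(setD1K u2); move: eq; rewrite /f => ->.
apply: subset_leq_card; apply/subsetP => X /imsetP[S SD ->].
move: SD; rewrite !inE => /andP[/maxISP[sub ind h] uS].
apply/maxISP; split.
- apply/subsetP => x; rewrite !inE => /andP[xu xS].
  rewrite (negbTE xu) (subsetP sub) //= andbT.
  by move/indepP: ind => /(_ u x uS xS).
- by apply: indep_sub ind; apply/subsetP => x; rewrite inE => /andP[].
- move=> x; rewrite !inE negb_or => /andP[/andP[xu xnb] xA] /nandP[/negPn/eqP xu'|xS].
    by rewrite xu' eqxx in xu.
  have [y yS exy] := h x xA xS; exists y => //.
  rewrite inE yS andbT; apply/negP; rewrite inE => /eqP yu.
  by move: xnb; rewrite xA esym -yu exy.
Qed.

Lemma alpha_dec (A L S : {set T}) u : u \in A -> L \subset nb A u -> L != set0 -> indIS A S ->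
  (#|S| <= #|S :\: (u |: L)| + #|L|)%N /\ indIS (A :\: (u |: L)) (S :\: (u |: L)).
Proof.
move=> uA Lnb L0 /andP[sub ind]; split; last first.
  rewrite /indIS; apply/andP; split.
    by apply/subsetP => x; rewrite !inE => /andP[-> /(subsetP sub)->].
  by apply: indep_sub ind; apply/subsetP => x; rewrite inE => /andP[].
rewrite -(cardsID (u |: L) S) addnC leq_add2l.
case: (boolP (u \in S)) => uS.
  have -> : S :&: (u |: L) = [set u].
    apply/setP => x; rewrite !inE; case: (eqVneq x u) => [->|xu]; first by rewrite uS.
    apply/negP => /andP[xS xL].
    move: (subsetP Lnb x xL); rewrite inE => /andP[_ eux].
    by move/indepP: ind => /(_ u x uS xS); rewrite eux.
  by rewrite cards1 card_gt0.
apply: subset_leq_card; apply/subsetP => x; rewrite !inE => /andP[xS /orP[/eqP xu|//]].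
by move: uS; rewrite -xu xS.
Qed.

Lemma noedge_mA (A : {set T}) : (forall x y, x \in A -> y \in A -> ~~ e x y) -> mIS A = 1%N.
Proof.
move=> ne; rewrite /mIS -(cards1 A); suff -> : [set S | maxIS A S] = [set A] by [].
apply/setP => S; rewrite !inE.
apply/idP/idP.
  case/maxISP => sub ind h; rewrite eqEsubset sub /=; apply/subsetP => x xA.
  apply/negPn/negP => xS; have [y yS exy] := h x xA xS.
  by have := ne x y xA (subsetP sub y yS); rewrite exy.
move/eqP->; apply/maxISP; split=> //; last by move=> x ->.
by apply/indepP => x y xA yA; apply: ne.
Qed.

Lemma card_rmC (A B C : {set T}) : C \subset A -> C \subset B -> (#|A :\: B| + #|C| <= #|A|)%N.
Proof.
move=> CA CB; rewrite -(cardsID B A) addnC leq_add2r; apply: subset_leq_card.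
by rewrite subsetI CA CB.
Qed.

Lemma indIS_card A S : indIS A S -> (#|S| <= #|A|)%N.
Proof. by case/andP => sub _; apply: subset_leq_card. Qed.

Lemma forest_bound k : forall A : {set T}, (#|A| <= k.*2.+1)%N ->
  (mIS A <= 2 ^ k)%N /\ forall S, indIS A S -> (#|S| + mIS A <= 2 ^ k + k + 1)%N.
Proof.
elim: k => [|k IH] A hA.
  have ne : forall x y, x \in A -> y \in A -> ~~ e x y.
    move=> x y xA yA; apply/negP => exy.
    have xy : x != y by apply/negP => /eqP xy; rewrite xy eirr in exy.
    have : (#|[set x; y]| <= #|A|)%N.
      by apply: subset_leq_card; apply/subsetP => z; rewrite !inE => /orP[]/eqP->.
    by rewrite cards2 xy; move: hA; rewrite /=; plia.
  rewrite noedge_mA //; split=> // S /indIS_card; move: hA => /=; plia.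
case: (boolP [exists x in A, exists y in A, e x y]); last first.
  move=> nex.
  have ne : forall x y, x \in A -> y \in A -> ~~ e x y.
    move=> x y xA yA; apply/negP => exy; move/negP: nex; apply.
    by apply/existsP; exists x; rewrite xA; apply/existsP; exists y; rewrite yA.
  have ex := ltn_expl k.+1 (isT : (1 < 2)%N).
  rewrite noedge_mA //; split; first by rewrite expn_gt0.
  move=> S /indIS_card; move: hA ex; rewrite doubleS /=; plia.
case/exists_inP => a aA /exists_inP[b bA eab].
have rab : relA A a b by rewrite /relA aA bA eab.
have [v [u [rvu leaf _]]] := leaf_struct rab.
case/and3P: rvu => vA uA evu.
have vnb : v \in nb A u by rewrite inE vA esym evu.
have vu : v != u by apply: nb_neq vnb.
have Lnb : [set v] \subset nb A u by rewrite sub1set.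
have Lleaf : forall x, x \in [set v] -> nb A x = [set u] by move=> x; rewrite inE => /eqP->.
have hdec := decomp uA Lnb Lleaf.
set A1 := A :\: (u |: [set v]) in hdec *.
set A2 := A :\: (u |: nb A u) in hdec *.
have c1 : (#|A1| + 2 <= #|A|)%N.
  have := @card_rmC A (u |: [set v]) [set u; v].
  rewrite cards2 eq_sym vu; apply.
    by apply/subsetP => z; rewrite !inE => /orP[]/eqP->.
  by apply/subsetP => z; rewrite !inE.
have c2 : (#|A2| + 2 <= #|A|)%N.
  have := @card_rmC A (u |: nb A u) [set u; v].
  rewrite cards2 eq_sym vu; apply.
    by apply/subsetP => z; rewrite !inE => /orP[]/eqP->.
  by apply/subsetP => z; rewrite !inE => /orP[]/eqP->; rewrite ?eqxx //; move: vnb; rewrite inE => ->; rewrite orbT.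
have [m1 h1] := IH A1 ltac:(move: hA c1; rewrite doubleS; plia).
have [m2 _] := IH A2 ltac:(move: hA c2; rewrite doubleS; plia).
rewrite expnS; split; first exact: ar_f1 hdec m1 m2.
move=> S hS.
have [cS iS] := alpha_dec uA Lnb ltac:(by apply/set0Pn; exists v; rewrite inE) hS.
rewrite cards1 in cS; exact: ar_f2 hdec cS (h1 _ iS) m2.
Qed.

Definition connA (A : {set T}) := forall x y, x \in A -> y \in A -> connect (relA A) x y.

Lemma path_restrict (A : {set T}) v x p : path (relA A) x p -> v \notin x :: p ->
  path (relA (A :\ v)) x p.
Proof.
elim: p x => [//|a p IHp] x /= /andP[rxa pp]; rewrite !inE negb_or => /andP[vx].
rewrite negb_or => /andP[va vp]; rewrite IHp ?inE ?negb_or ?va //= andbT.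
by case/and3P: rxa => xA aA exa; rewrite /relA !inE xA aA exa eq_sym vx eq_sym va.
Qed.

Lemma conn_leaf (A : {set T}) v u : connA A -> nb A v \subset [set u] -> connA (A :\ v).
Proof.
move=> cA sub x y; rewrite !inE => /andP[xv xA] /andP[yv yA].
have /connectP[p pp ey] := cA x y xA yA.
move: ey; case: (shortenP pp) => p' pp' up' _ ey.
apply/connectP; exists p' => //.
apply: path_restrict => //; rewrite inE negb_or eq_sym xv /=.
apply/negP => vp'.
move: yv; rewrite ey.
case/splitPr: vp' pp' up' {ey} => p1 p2.
rewrite cat_path last_cat /= => /andP[_ /andP[rav pv]] up'.
case: p2 pv up' => [|b p3]; first by rewrite /= eqxx.
move=> /= /andP[rvb _] up' _.
have anb : last x p1 \in nb A v.
  by case/and3P: rav => aA _ eav; rewrite inE aA esym eav.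
have bnb : b \in nb A v by case/and3P: rvb => _ bA evb; rewrite inE bA evb.
move: (subsetP sub _ anb) (subsetP sub _ bnb); rewrite !inE => /eqP ha /eqP hb.
have up2 : uniq ((x :: p1) ++ [:: v, b & p3]) by exact: up'.
move: up2; rewrite cat_uniq => /and3P[_ /hasPn dis _].
have : b \notin x :: p1 by apply: dis; rewrite !inE eqxx orbT.
by rewrite hb -ha mem_last.
Qed.

Lemma conn_pair (A : {set T}) u v : connA A -> u \in A -> nb A u \subset [set v] ->
  nb A v \subset [set u] -> A \subset [set u; v].
Proof.
move=> cA uA su sv; apply/subsetP => x xA.
have /connectP[p pp ->] := cA u x uA xA.
case: (shortenP pp) => p' pp' up' _.
case: p' pp' up' => [|a [|b p3]] /=; first by rewrite !inE eqxx.
  rewrite andbT => rua _; case/and3P: (rua) => _ aA eua.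
  have : a \in nb A u by rewrite inE aA eua.
  by move/(subsetP su); rewrite !inE => ->; rewrite orbT.
case/and3P => rua rab _; case/and3P: (rua) => _ aA eua; case/and3P: (rab) => _ bA eab.
have : a \in nb A u by rewrite inE aA eua.
move/(subsetP su); rewrite inE => /eqP ea.
have : b \in nb A v by rewrite inE bA -ea eab.
move/(subsetP sv); rewrite inE => /eqP eb.
by rewrite eb !inE eqxx /= orbT.
Qed.

Lemma conn_edge (A : {set T}) : connA A -> (1 < #|A|)%N -> exists a b, relA A a b.
Proof.
move=> cA /card_gt1P[x [y [xA yA xy]]].
have /connectP[p pp ey] := cA x y xA yA.
case: p pp ey => [|a p] /=; first by move=> _ ey; rewrite ey eqxx in xy.
by case/andP => r _ _; exists x, a.
Qed.

Lemma even_tree j : forall A : {set T}, connA A -> #|A| = (j.+1).*2 ->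
  forall S, indIS A S -> (#|S| + mIS A <= 2 ^ j + j + 2)%N.
Proof.
elim/ltn_ind: j => j IH A cA hA S hS.
have [a [b rab]] := conn_edge cA ltac:(rewrite hA; plia).
have [v [u [rvu leaf H]]] := leaf_struct rab.
case/and3P: rvu => vA uA evu.
have vnb : v \in nb A u by rewrite inE vA esym evu.
have vu : v != u by apply: nb_neq vnb.
have nbA : forall y, y \in nb A u -> y \in A by move=> y; rewrite inE => /andP[].
have e2 := ltn_expl j (isT : (1 < 2)%N).
case: (boolP [exists v' in nb A u, (v' != v) && (nb A v' == [set u])]).
  case/exists_inP => v' v'nb /andP[v'v /eqP leaf'].
  have v'u : v' != u by apply: nb_neq v'nb.
  pose L := [set v; v'].
  have Lnb : L \subset nb A u by apply/subsetP => z; rewrite /L !inE => /orP[]/eqP->; [move: vnb | move: v'nb]; rewrite inE.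
  have Lleaf : forall x, x \in L -> nb A x = [set u] by move=> x; rewrite /L !inE => /orP[]/eqP->.
  have hdec := decomp uA Lnb Lleaf.
  have L0 : L != set0 by apply/set0Pn; exists v; rewrite !inE eqxx.
  have [cS iS] := alpha_dec uA Lnb L0 hS.
  have cL : #|L| = 2 by rewrite cards2 eq_sym v'v.
  have c3 : #|[set u; v; v']| = 3.
    rewrite -setUA cardsU1 cards2 eq_sym v'v !inE negb_or.
    by rewrite eq_sym vu eq_sym v'u.
  have c1 : (#|A :\: (u |: L)| + 3 <= #|A|)%N.
    rewrite -c3; apply: card_rmC.
      by apply/subsetP => z; rewrite !inE => /orP[/orP[]|]/eqP->; rewrite ?uA ?vA ?nbA.
    by apply/subsetP => z; rewrite !inE => /orP[/orP[]|]/eqP->; rewrite eqxx ?orbT.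
  have c2 : (#|A :\: (u |: nb A u)| + 3 <= #|A|)%N.
    rewrite -c3; apply: card_rmC.
      by apply/subsetP => z; rewrite !inE => /orP[/orP[]|]/eqP->; rewrite ?uA ?vA ?nbA.
    apply/subsetP => z; rewrite !inE => /orP[/orP[]|]/eqP->; rewrite ?eqxx //.
      by move: vnb; rewrite inE => ->; rewrite orbT.
    by move: v'nb; rewrite inE => ->; rewrite orbT.
  case: j IH hA e2 => [|j] _ hA e2; first by move: c1; rewrite hA; plia.
  have [_ h1] := forest_bound (A := A :\: (u |: L)) (k := j) ltac:(move: c1; rewrite hA; plia).
  have [m2 _] := forest_bound (A := A :\: (u |: nb A u)) (k := j) ltac:(move: c2; rewrite hA; plia).
  rewrite cL in cS; rewrite expnS; exact: ar_e1 hdec cS (h1 _ iS) m2.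
move=> n1.
have n1' : forall y, y \in nb A u -> y != v -> nb A y != [set u].
  move=> y ynb yv; apply/negP => /eqP ly; move/negP: n1; apply.
  by apply/exists_inP; exists y => //; rewrite yv ly eqxx.
have Lnb : [set v] \subset nb A u by rewrite sub1set.
have Lleaf : forall x, x \in [set v] -> nb A x = [set u] by move=> x; rewrite inE => /eqP->.
have hdec := decomp uA Lnb Lleaf.
have L0 : [set v] != set0 by apply/set0Pn; exists v; rewrite !inE eqxx.
have [cS iS] := alpha_dec uA Lnb L0 hS.
rewrite cards1 in cS.
have c1 : (#|A :\: (u |: [set v])| + 2 <= #|A|)%N.
  have := @card_rmC A (u |: [set v]) [set u; v].
  rewrite cards2 eq_sym vu; apply.
    by apply/subsetP => z; rewrite !inE => /orP[]/eqP->.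
  by apply/subsetP => z; rewrite !inE.
case: (boolP [exists w in nb A u, w != v]); last first.
  move=> nw.
  have su : nb A u \subset [set v].
    apply/subsetP => y ynb; rewrite inE; apply/negPn/negP => yv; move/negP: nw; apply.
    by apply/exists_inP; exists y.
  have sv : nb A v \subset [set u] by rewrite leaf.
  have Asub := conn_pair cA uA su sv.
  have cA2 : (#|A| <= 2)%N by apply: leq_trans (subset_leq_card Asub) _; rewrite cards2; case: (u != v).
  have [m1 h1] := forest_bound (A := A :\: (u |: [set v])) (k := 0) ltac:(move: c1 cA2; plia).
  have s21 : A :\: (u |: nb A u) \subset A :\: (u |: [set v]).
    apply/subsetP => z; rewrite !inE !negb_or => /andP[/andP[zu znb] zA].
    rewrite zu zA andbT /=; apply/negP => /eqP zv; move: znb vnb; rewrite zv inE => /negP; apply.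
  have [m2 _] := forest_bound (A := A :\: (u |: nb A u)) (k := 0)
    ltac:(move: (subset_leq_card s21) c1 cA2; plia).
  apply: ar_e2 hdec cS _ m1 m2 _; last by rewrite expn_gt0.
  by have := indIS_card iS; move: c1 cA2; plia.
case/exists_inP => w wnb wv.
have wl := n1' w wnb wv.
have nbu : forall y, y \in nb A u -> y != v -> y = w.
  move=> y ynb yv; exact: H (n1' y ynb yv) wl.
have wu : w != u by apply: nb_neq wnb.
have cA' : connA (A :\ v) by apply: conn_leaf cA _; rewrite leaf.
have cA1 : connA (A :\: (u |: [set v])).
  have -> : A :\: (u |: [set v]) = (A :\ v) :\ u.
    by apply/setP => z; rewrite !inE negb_or andbA.
  apply: conn_leaf cA' _; apply/subsetP => y; rewrite !inE => /andP[/andP[yv yA] euy].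
  by rewrite (nbu y) // inE yA euy.
have c3 : #|[set u; v; w]| = 3.
  rewrite -setUA cardsU1 cards2 (eq_sym v w) wv !inE negb_or.
  by rewrite eq_sym vu eq_sym wu.
have c2 : (#|A :\: (u |: nb A u)| + 3 <= #|A|)%N.
  rewrite -c3; apply: card_rmC.
    by apply/subsetP => z; rewrite !inE => /orP[/orP[]|]/eqP->; rewrite ?uA ?vA ?nbA.
  apply/subsetP => z; rewrite !inE => /orP[/orP[]|]/eqP->; rewrite ?eqxx //.
    by move: vnb; rewrite inE => ->; rewrite orbT.
  by move: wnb; rewrite inE => ->; rewrite orbT.
have wA1 : w \in A :\: (u |: [set v]) by rewrite !inE negb_or wu wv nbA.
have c1' : #|A :\: (u |: [set v])| = (j.*2)%N.
  have := @card_rmC A (u |: [set v]) [set u; v].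
  rewrite cards2 eq_sym vu => h.
  have : (#|A :\: (u |: [set v])| + 2 >= #|A|)%N.
    rewrite -(cardsID (u |: [set v]) A) addnC leq_add2l.
    by apply: leq_trans (subset_leq_card (subsetIr _ _)) _; rewrite cardsU1 cards1; case: (u \notin [set v]).
  move: c1; rewrite hA; plia.
case: j IH hA e2 c1' => [|j] IH hA e2 c1'.
  by move: wA1; rewrite (card0_eq c1') inE.
have h1 := IH j (ltnSn j) _ cA1 c1' _ iS.
have [m2 _] := forest_bound (A := A :\: (u |: nb A u)) (k := j) ltac:(move: c2; rewrite hA; plia).
rewrite expnS; exact: ar_e3 hdec cS h1 m2.
Qed.

End Graph.

Section Count.
Variables (T : finType) (e : rel T).
Hypotheses (esym : symmetric e) (eirr : irreflexive e).

Definition Iset j := [set S : {set T} | independent e S && (#|S| == j)].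
Definition Mset j := [set S : {set T} | maxIS e setT S && (#|S| == j)].

Lemma card_pairs (P1 : {set {set T}}) :
  #|[set p : {set T} * T | (p.1 \in P1) && (p.2 \in p.1)]| = (\sum_(J in P1) #|J|)%N.
Proof.
rewrite -sum1_card.
under [RHS]eq_bigr => J _ do rewrite -sum1_card.
rewrite pair_big_dep; apply: eq_bigl => p; rewrite inE.
by case: p.
Qed.

Lemma add_indep (S : {set T}) x : independent e S -> [forall y in S, ~~ e x y] ->
  independent e (x |: S).
Proof.
move=> /(indepP) ind /forall_inP hx; apply/indepP => a b; rewrite !inE.
move=> /orP[/eqP->|aS] /orP[/eqP->|bS].
- by rewrite eirr.
- exact: hx.
- by rewrite esym; apply: hx.
- exact: ind.
Qed.

Lemma count_ineq j : (#|Iset j| <= j.+1 * #|Iset j.+1| + #|Mset j|)%N.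
Proof.
set N := Iset j :\: Mset j.
have h1 : (#|Iset j| <= #|N| + #|Mset j|)%N.
  rewrite -(cardsID (Mset j) (Iset j)) addnC leq_add2l.
  by apply: subset_leq_card; apply: subsetIr.
apply: leq_trans h1 _; rewrite leq_add2r.
case: (set_0Vmem N) => [->|[S0 S0N]]; first by rewrite cards0.
have ext : forall S, S \in N -> exists x, (x \notin S) && [forall y in S, ~~ e x y].
  move=> S; rewrite !inE => /andP[nM /andP[ind /eqP cS]].
  case: (boolP [exists x, (x \notin S) && [forall y in S, ~~ e x y]]) => [/existsP//|nex].
  exfalso; move: nM; rewrite cS eqxx andbT => /negP; apply; apply/maxISP; split=> //.
  move=> x _ xS; case: (boolP [exists y in S, e x y]) => [/exists_inP[y yS exy]|ne].
    by exists y.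
  move/negP: nex; case; apply/existsP; exists x; rewrite xS /=.
  by rewrite negb_exists_in in ne.
have [x0 _] := ext S0 S0N.
pose pickx (S : {set T}) := odflt x0 [pick x | (x \notin S) && [forall y in S, ~~ e x y]].
have pk : forall S, S \in N -> (pickx S \notin S) && [forall y in S, ~~ e (pickx S) y].
  move=> S SN; rewrite /pickx; case: pickP => [x hx //|none].
  by have [x hx] := ext S SN; rewrite none in hx.
pose F (S : {set T}) := (pickx S |: S, pickx S).
rewrite -(card_in_imset (f := F)); last first.
  move=> S1 S2 S1N S2N [eq1 eq2].
  have := pk S1 S1N; have := pk S2 S2N; rewrite -eq2 => /andP[n2 _] /andP[n1 _].
  have e1 : pickx S1 |: S1 = pickx S1 |: S2 by rewrite eq1 eq2.
  move: n1 n2 e1; move: (pickx S1) => x n1 n2 e1.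
  by rewrite -(setU1K n1) -(setU1K n2) e1.
apply: leq_trans (subset_leq_card (_ : _ \subset [set p : {set T} * T | (p.1 \in Iset j.+1) && (p.2 \in p.1)])) _.
  apply/subsetP => p /imsetP[S SN ->]; rewrite inE /= setU11 andbT.
  have := pk S SN; move: SN; rewrite !inE => /andP[_ /andP[ind /eqP cS]] /andP[xS hx].
  by rewrite (add_indep ind hx) /= cardsU1 xS cS.
rewrite card_pairs.
rewrite (eq_bigr (fun _ => j.+1)); last by move=> J; rewrite inE => /andP[_ /eqP ->].
by rewrite sum_nat_const mulnC.
Qed.

End Count.

Import Order.TTheory GRing.Theory Num.Theory.
Local Open Scope ring_scope.

Definition prevb (b : nat -> nat) j := if j is j'.+1 then b j' else 0%N.

Lemma ek_ident (R : comRingType) (b : nat -> R) d (y : R) :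
  (1 - y) * \sum_(j < d.+1) b j * y ^+ j =
  \sum_(j < d.+1) (b j - (if (j : nat) is j'.+1 then b j' else 0)) * y ^+ j - b d * y ^+ d.+1.
Proof.
elim: d => [|d IH].
  by rewrite !big_ord_recr !big_ord0 /= !add0r expr0 expr1 subr0; ring.
rewrite big_ord_recr [in RHS]big_ord_recr /= mulrDr IH.
move: (\sum_(i < d.+1) _) => s; rewrite !exprS; ring.
Qed.

Lemma ek_tele (b : nat -> nat) d : (forall j, (j < d)%N -> (b j <= b j.+1)%N) ->
  (\sum_(j < d.+1) (b j - prevb b j) = b d)%N.
Proof.
elim: d => [|d IH] mon; first by rewrite big_ord_recr big_ord0 /= subn0.
rewrite big_ord_recr /= IH; last by move=> j jd; apply: mon; apply: ltnW.
by rewrite subnKC // mon.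
Qed.

Lemma EK (C : numClosedFieldType) (b : nat -> nat) d (y : C) :
  (forall j, (j < d)%N -> (b j <= b j.+1)%N) -> (0 < b d)%N -> 1 < `|y| ->
  \sum_(j < d.+1) (b j)%:R * y ^+ j != 0.
Proof.
move=> mon bd y1; apply/negP => /eqP S0.
have := ek_ident (fun j => (b j)%:R) d y; rewrite S0 mulr0 => /eqP.
rewrite eq_sym subr_eq0 => /eqP eq.
have ceq : forall j : 'I_d.+1, ((b j)%:R - (if (j : nat) is j'.+1 then (b j')%:R else 0)) = ((b j - prevb b j)%N%:R : C).
  move=> [[|j] jl] /=; first by rewrite !subr0 subn0.
  by rewrite natrB // mon.
have y0 : 0 < `|y| by apply: lt_trans y1.
have : `|(b d)%:R * y ^+ d.+1| <= (b d)%:R * `|y| ^+ d.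
  rewrite -eq; apply: le_trans (ler_norm_sum _ _ _) _.
  rewrite -(ek_tele mon) natr_sum mulr_suml; apply: ler_sum => j _.
  rewrite ceq normrM normrX ger0_norm ?ler0n //; apply: ler_wpM2l; first exact: ler0n.
  apply: ler_weXn2l; first exact: ltW.
  by rewrite -ltnS.
rewrite normrM normrX ger0_norm ?ler0n // exprS mulrCA.
rewrite ger_pMl; first by move=> h; have := lt_le_trans y1 h; rewrite ltxx.
by rewrite mulr_gt0 ?ltr0n ?exprn_gt0.
Qed.

Unset Implicit Arguments. Set Strict Implicit.

Lemma ar_ratio i0 i1 j d m B : (i0 <= j.+1 * i1 + (m - 1) -> 0 < i1 -> j < d -> d + m <= B + 1 ->
  0 < m -> i0 <= B * i1)%N.
Proof.
move=> h1 h2 h3 h4 h5.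
have h6 : (m - 1 <= (m - 1) * i1)%N by rewrite leq_pmulr.
have h7 : (j.+1 + (m - 1) <= B)%N by lia.
apply: leq_trans h1 _; apply: leq_trans (leq_mul h7 (leqnn i1)); rewrite mulnDl; lia.
Qed.

Lemma sum_trunc (R : nzRingType) (F : nat -> R) n d : (d <= n)%N -> (forall k, (d < k)%N -> F k = 0) ->
  \sum_(k < n.+1) F k = \sum_(k < d.+1) F k.
Proof.
move=> dn hF; symmetry; rewrite (big_ord_widen n.+1 F (_ : d.+1 <= n.+1)%N) // big_mkcond /=.
apply: eq_bigr => k _; case: ifP => // /negbT; rewrite -leqNgt => h; by rewrite hF.
Qed.

Theorem corollary2 (C : numClosedFieldType) (n : nat) (hn : (1 <= n)%N)
  (T : finType) (e : rel T) (hT : #|T| = n) (htree : is_tree e) (z : C) :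
  root (indep_poly C e) z -> `|z| <= (MT_bound n)%:R.
Proof.
case: htree => [[esym eirr] [conn acyc]] rz.
pose B := MT_bound n.
pose i j := indep_count e j.
have ie : forall j, i j = #|Iset e j| by [].
have i0 : independent e set0 by apply/indepP => x y; rewrite inE.
case: (@arg_maxnP _ set0 (fun S => independent e S) (fun S => #|S|) i0) => D indD Dmax.
set d := #|D|.
have dT : (d <= #|T|)%N by rewrite /d -cardsT; apply: subset_leq_card; apply: subsetT.
have Dm : maxIS e setT D.
  apply/maxISP; split => //.
  move=> x _ xD; case: (boolP [exists y in D, e x y]) => [/exists_inP[y yD exy]|ne].
    by exists y.
  rewrite negb_exists_in in ne.
  have := Dmax _ (add_indep esym eirr indD ne); rewrite cardsU1 xD.
  by move=> /=; rewrite add1n ltnn.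
have iD : indIS e setT D by rewrite /indIS subsetT.
have hB : (d + mIS e setT <= B + 1)%N.
  rewrite /B /MT_bound; have := odd_double_half n.
  case: (boolP (odd n)) => on /= hn2.
    have [_ h] := forest_bound esym eirr acyc (k := n./2) (A := setT)
      ltac:(by rewrite cardsT hT -{1}hn2 add1n).
    have -> : ((n - 1) %/ 2 = n./2)%N by rewrite -{1}hn2 add1n subn1 /= -muln2 mulnK.
    have := h _ iD; rewrite /d; lia.
  have cT : connA e setT.
    move=> x y _ _; rewrite (@eq_connect _ _ e) ?conn //.
    by move=> a b; rewrite /relA !inE.
  case E: n./2 hn2 => [|j] hn2; first by move: hn hn2; rewrite add0n; lia.
  have := even_tree esym eirr acyc (j := j) (A := setT) cT
    ltac:(by rewrite cardsT hT -hn2 add0n) iD.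
  have -> : ((n - 2) %/ 2 = j)%N by rewrite -hn2 add0n doubleS subn2 /= -muln2 mulnK.
  have -> : (n %/ 2 = j.+1)%N by rewrite -hn2 add0n -muln2 mulnK.
  rewrite /d; lia.
have Bpos : (0 < B)%N by rewrite /B /MT_bound; case: ifP => _; rewrite addn_gt0 expn_gt0.
have izero : forall j, (d < j)%N -> i j = 0%N.
  move=> j dj; rewrite ie; apply/eqP; rewrite cards_eq0; apply/eqP/setP => S.
  rewrite !inE; apply/negP => /andP[iS /eqP cS].
  have := Dmax _ iS; move=> /= h; by move: h; rewrite cS leqNgt dj.
have ipos : forall j, (j <= d)%N -> (0 < i j)%N.
  move=> j jd; rewrite ie.
  apply: leq_trans (_ : (0 < #|[set S : {set T} | S \subset D & #|S| == j]|)%N) _.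
    by rewrite cards_draws bin_gt0.
  apply: subset_leq_card; apply/subsetP => S; rewrite !inE => /andP[sub ->].
  by rewrite (indep_sub sub indD).
have ratio : forall j, (j < d)%N -> (i j <= B * i j.+1)%N.
  move=> j jd.
  have hc := count_ineq esym eirr j.
  have hM : (#|Mset e j| < mIS e setT)%N.
    apply: proper_card; rewrite properE; apply/andP; split.
      by apply/subsetP => S; rewrite !inE => /andP[].
    apply/subsetPn; exists D; first by rewrite inE.
    by rewrite inE negb_and; apply/orP; right; rewrite /d in jd; rewrite neq_ltn jd orbT.
  apply: (@ar_ratio _ _ j d (mIS e setT)) => //; [|exact: ipos|by apply: leq_ltn_trans hM].
  rewrite -!ie in hc; apply: leq_trans hc _; rewrite leq_add2l; lia.
(* the Enestrom-Kakeya step *)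
move: rz; rewrite /root /indep_poly horner_poly.
rewrite (@sum_trunc _ (fun k => (indep_count e k)%:R * z ^+ k) _ _ dT); last first.
  by move=> k dk; rewrite -/(i k) izero ?mul0r.
move=> rz.
case: (boolP (`|z| <= B%:R)) => // hz; exfalso.
have Bn0 : (B%:R : C) != 0 by rewrite pnatr_eq0 -lt0n.
have lt : (B%:R : C) < `|z| by rewrite real_ltNge ?realn ?normr_real.
have y1 : 1 < `|z / B%:R|.
  by rewrite normrM normfV normr_nat ltr_pdivlMr ?ltr0n // mul1r.
have mon : forall j, (j < d)%N -> (i j * B ^ j <= i j.+1 * B ^ j.+1)%N.
  move=> j jd; rewrite expnS mulnA leq_mul2r; apply/orP; right; rewrite mulnC; exact: ratio.
have pos : (0 < i d * B ^ d)%N by rewrite muln_gt0 expn_gt0 Bpos ipos.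
have := EK (b := fun j => (i j * B ^ j)%N) mon pos y1.
rewrite (eq_bigr (fun k : 'I_d.+1 => (indep_count e k)%:R * z ^+ k)); last first.
  move=> k _; rewrite natrM natrX exprMn exprVn mulrACA divff ?mulr1 //.
  by rewrite expf_neq0.
by rewrite (eqP rz) eqxx.
Qed.
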